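(* Let $\mathcal I$ be a finite set of followers, $\pi$ a fixed leader strategy, and for each $i\in\mathcal I$ let $\mathcal X_i=\{x^i\in\mathbb{R}^{m_F}\mid A_ix^i=b_i,\ G_ix^i\le h_i\}$ be nonempty, compact and satisfying Slater's condition. Let $J^i(x^i,x^{-i},\pi)=\tfrac12 (x^i)^TPx^i+(x^i)^TQ\sigma(x^{-i})+r_i^Tx^i+(x^i)^TS_i\pi$ with $\sigma(x^{-i})=\sum_{j\ne i}x^j$, $P=P^T\succ0$, $Q=Q^T\succeq0$, $P\succ Q$, $S_i$ diagonal with $S_i\succeq0$, and let $x^*=(x^{i*},x^{-i*})$ be the unique Nash equilibrium of the followers' game (obtained by the Picard–Banach iteration $x_{k+1}=\Pi_{\mathcal X}[x_k-\gamma F(x_k,\pi)]$). Fix $i$; let $\overline G_i,\overline h_i$ be the rows of $G_i,h_i$ corresponding to constraints active at $x^{i*}$ and $\underline G_i,\underline h_i$ the remaining rows (so $\overline G_ix^{i*}=\overline h_i$, $\underline G_ix^{i*}<\underline h_i$), and set $\overline A_i=\begin{bmatrix}A_i\\ \overline G_i\end{bmatrix}$, $\overline b_i=\begin{bmatrix}b_i\\ \overline h_i\end{bmatrix}$. Consider the auxiliary best-response problem $$\min_{x^i\in\mathbb{R}^{m_F}}J^i(x^i,x^{-i*},\pi)\ \text{ s.t. } \overline A_ix^i=\overline b_i,\ \underline G_ix^i\le\underline h_i,$$ with KKT map, for $z_i=(x^i,\lambda_i,\nu_i)$, $$l_i(z_i,\pi\mid x^{-i*})=\begin{bmatrix}\nabla_{x^i}J^i(x^i,x^{-i*},\pi)+\underline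 G_i^T\lambda_i+\overline A_i^T\nu_i\\ \mathrm{Dg}(\lambda_i)(\underline G_ix^i-\underline h_i)\\ \overline A_ix^i-\overline b_i\end{bmatrix},$$ and let $\hat z_i=(x^{i*},\hat\lambda_i,\hat\nu_i)$ be its KKT point (primal-dual optimal solution). Assume $\overline A_i$ has full row rank. Then the set $\overline\Gamma_i=\{j\mid (\hat\lambda_i)_j=0\text{ and }(\underline G_ix^{i*}-\underline h_i)_j=0\}$ is empty, and the Jacobian $\mathbf D_{z_i}l_i(\hat z_i,\pi\mid x^{-i*})$ is invertible and equals $$\begin{bmatrix}\nabla_{x^ix^i}J^i & \underline G_i^T & \overline A_i^T\\ \mathbf 0 & \mathrm{Dg}(\underline G_ix^{i*}-\underline h_i) & \mathbf 0\\ \overline A_i & \mathbf 0 & \mathbf 0\end{bmatrix}.$$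
   Context: $\mathrm{Dg}(v)$ denotes the diagonal matrix with the vector $v$ on its diagonal; $\mathbf D_{z}f$ denotes the Jacobian of $f$ with respect to $z$. $F(x,\pi)=\mathrm{col}((\nabla_{x^i}J^i)_i)$ is the pseudo-gradient of the followers' game and $\Pi_{\mathcal X}$ the Euclidean projection onto $\mathcal X=\prod_i\mathcal X_i$. *)

(* Defs.v *)
From HB Require Import structures.
From mathcomp Require Import all_boot all_order all_algebra.
From mathcomp Require Import all_classical all_reals all_analysis.
Set Implicit Arguments. Unset Strict Implicit. Unset Printing Implicit Defensive.
Import Order.TTheory GRing.Theory Num.Theory.
Import numFieldNormedType.Exports.
Local Open Scope classical_set_scope.
Local Open Scope ring_scope.

Section GameDefs.
Variable R : realType.

Definition jac n k (f : 'cV[R]_n -> 'cV[R]_k) (z : 'cV[R]_n) : 'M[R]_(k, n) :=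
  \matrix_(r, c) derive1 (fun t : R => f (z + t *: delta_mx c 0) r 0) 0.

Definition gradient n (g : 'cV[R]_n -> R) (z : 'cV[R]_n) : 'cV[R]_n :=
  \col_c derive1 (fun t : R => g (z + t *: delta_mx c 0)) 0.

Definition Dg n (v : 'cV[R]_n) : 'M[R]_n := diag_mx v^T.

Definition posdef n (M : 'M[R]_n) : Prop :=
  forall v : 'cV[R]_n, v != 0 -> 0 < (v^T *m M *m v) 0 0.
Definition psd n (M : 'M[R]_n) : Prop :=
  forall v : 'cV[R]_n, 0 <= (v^T *m M *m v) 0 0.

Definition polyset m p q (A : 'M[R]_(p, m)) (b : 'cV[R]_p)
  (G : 'M[R]_(q, m)) (h : 'cV[R]_q) : set 'cV[R]_m :=
  [set x | A *m x = b /\ forall j, (G *m x) j 0 <= h j 0].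

Definition slater m p q (A : 'M[R]_(p, m)) (b : 'cV[R]_p)
  (G : 'M[R]_(q, m)) (h : 'cV[R]_q) : Prop :=
  exists x : 'cV[R]_m, A *m x = b /\ forall j, (G *m x) j 0 < h j 0.

Definition sigma_others N m (x : 'I_N -> 'cV[R]_m) (i : 'I_N) : 'cV[R]_m :=
  \sum_(j < N | j != i) x j.

(* J^i(y, x^{-i}, pi); the i-th entry of the profile x is ignored. *)
Definition Jcost N m (P Q : 'M[R]_m) (r : 'I_N -> 'cV[R]_m)
  (S : 'I_N -> 'M[R]_m) (pi : 'cV[R]_m) (i : 'I_N)
  (y : 'cV[R]_m) (x : 'I_N -> 'cV[R]_m) : R :=
  (y^T *m P *m y) 0 0 / 2 + (y^T *m Q *m sigma_others x i) 0 0
  + ((r i)^T *m y) 0 0 + (y^T *m S i *m pi) 0 0.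

Definition is_NE N m (X : 'I_N -> set 'cV[R]_m)
  (J : 'I_N -> 'cV[R]_m -> ('I_N -> 'cV[R]_m) -> R) (xs : 'I_N -> 'cV[R]_m) : Prop :=
  forall i, X i (xs i) /\ forall y, X i y -> J i (xs i) xs <= J i y xs.

Definition active_set m q (G : 'M[R]_(q, m)) (h : 'cV[R]_q) (x : 'cV[R]_m)
  : {set 'I_q} := [set j | (G *m x) j 0 == h j 0].

Section Split.
Variables (m p q : nat) (A : 'M[R]_(p, m)) (b : 'cV[R]_p)
  (G : 'M[R]_(q, m)) (h : 'cV[R]_q) (xs : 'cV[R]_m).

Local Notation act := (active_set G h xs).

Definition Gover : 'M[R]_(#|act|, m) := rowsub (fun k => @enum_val _ (mem act) k) G.
Definition hover : 'cV[R]_(#|act|) := rowsub (fun k => @enum_val _ (mem act) k) h.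
Definition Gunder : 'M[R]_(#|~: act|, m) :=
  rowsub (fun k => @enum_val _ (mem (~: act)) k) G.
Definition hunder : 'cV[R]_(#|~: act|) :=
  rowsub (fun k => @enum_val _ (mem (~: act)) k) h.
Definition Abar : 'M[R]_(p + #|act|, m) := col_mx A Gover.
Definition bbar : 'cV[R]_(p + #|act|) := col_mx b hover.

(* KKT map l_i(z | x^{-i*}); gJ is the map x^i |-> grad_{x^i} J^i(x^i,x^{-i*},pi);
   z = (x^i, lambda_i, nu_i). *)
Definition kkt_map (gJ : 'cV[R]_m -> 'cV[R]_m)
  (z : 'cV[R]_(m + #|~: act| + (p + #|act|))) : 'cV[R]_(m + #|~: act| + (p + #|act|)) :=
  let x := usubmx (usubmx z) in
  let lam := dsubmx (usubmx z) in
  let nu := dsubmx z in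
  col_mx (col_mx (gJ x + Gunder^T *m lam + Abar^T *m nu)
                 (Dg lam *m (Gunder *m x - hunder)))
         (Abar *m x - bbar).

Definition Gamma_bar (lam : 'cV[R]_(#|~: act|)) : {set 'I_(#|~: act|)} :=
  [set j | (lam j 0 == 0) && ((Gunder *m xs - hunder) j 0 == 0)].
End Split.

End GameDefs.

Arguments Gover {R m q} G h xs.
Arguments hover {R m q} G h xs.
Arguments Gunder {R m q} G h xs.
Arguments hunder {R m q} G h xs.
Arguments Abar {R m p q} A G h xs.
Arguments bbar {R m p q} b G h xs.
Arguments kkt_map {R m p q} A b G h xs gJ z.
Arguments Gamma_bar {R m q} G h xs lam.

(* Main.v *)
Require Import Defs.
From HB Require Import structures.
From mathcomp Require Import all_boot all_order all_algebra.
From mathcomp Require Import all_classical all_reals all_analysis.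
From mathcomp Require Import ring zify.
Import Order.TTheory GRing.Theory Num.Theory.
Import numFieldNormedType.Exports.
Local Open Scope classical_set_scope.
Local Open Scope ring_scope.

Lemma tr1x (R : realType) (X : 'M[R]_1) : X^T = X.
Proof. by apply/matrixP=> a b; rewrite (ord1 a) (ord1 b) mxE. Qed.

Lemma tr11 (R : realType) m (u v : 'cV[R]_m) (M : 'M[R]_m) :
  u^T *m M *m v = v^T *m M^T *m u.
Proof. by rewrite -[LHS]tr1x !trmx_mul trmxK mulmxA. Qed.

Lemma tr1 (R : realType) m (u v : 'cV[R]_m) : u^T *m v = v^T *m u.
Proof. by rewrite -[LHS]tr1x !trmx_mul trmxK. Qed.

Lemma Jexp (R : realType) N m (P Q : 'M[R]_m) (r : 'I_N -> 'cV[R]_m)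
  (S : 'I_N -> 'M[R]_m) (pi : 'cV[R]_m) (i : 'I_N) (xs : 'I_N -> 'cV[R]_m)
  (hP : P^T = P) (y e : 'cV[R]_m) (t : R) :
  Jcost P Q r S pi i (y + t *: e) xs = Jcost P Q r S pi i y xs
   + t * (e^T *m (P *m y + (Q *m sigma_others xs i + r i + S i *m pi))) 0 0
   + t ^+ 2 * ((e^T *m P *m e) 0 0 / 2).
Proof.
rewrite /Jcost.
set s := sigma_others xs i.
have -> : (y + t *: e)^T = y^T + t *: e^T by apply/matrixP=> a b; rewrite !mxE.
rewrite !mulmxDl !mulmxDr -!scalemxAl -!scalemxAr.
rewrite ?mulmxDr !mulmxA.
rewrite (tr11 _ _ y e P) hP (tr1 _ _ (r i) e).
set a1 := y^T *m P *m y. set a2 := e^T *m P *m y. set a3 := e^T *m P *m e.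
set a4 := y^T *m Q *m s. set a5 := e^T *m Q *m s. set a6 := (r i)^T *m y.
set a7 := e^T *m r i. set a8 := y^T *m S i *m pi. set a9 := e^T *m S i *m pi.
rewrite !mxE.
move: (a1 0 0) (a2 0 0) (a3 0 0) (a4 0 0) (a5 0 0) (a6 0 0) (a7 0 0) (a8 0 0) (a9 0 0) => *.
by field.
Qed.
Lemma d1q (R : realType) (a b c : R) :
  derive1 (fun t : R => a + t * b + t ^+ 2 * c) 0 = b.
Proof.
rewrite derive1E; apply: derive_val; apply: is_derive_eq.
rewrite !(scaler0, mul0r, add0r, scale0r, expr0n, addr0) /=. by rewrite mul1r /GRing.scale /= mulr1.
Qed.

Lemma d1l (R : realType) (a b : R) :
  derive1 (fun t : R => a + t * b) 0 = b.
Proof.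
have := d1q R a b 0.
by under eq_fun do rewrite mulr0 addr0.
Qed.

Lemma jac_affine (R : realType) n k (f : 'cV[R]_n -> 'cV[R]_k) z (M : 'M[R]_(k, n)) :
  (forall c (t : R), f (z + t *: delta_mx c 0) = f z + t *: (M *m delta_mx c 0)) ->
  jac f z = M.
Proof.
move=> H; apply/matrixP => r c; rewrite mxE.
under eq_fun do rewrite H -colE !mxE.
exact: d1l.
Qed.

Lemma grad_J (R : realType) N m (P Q : 'M[R]_m) (r : 'I_N -> 'cV[R]_m)
  (S : 'I_N -> 'M[R]_m) (pi : 'cV[R]_m) (i : 'I_N) (xs : 'I_N -> 'cV[R]_m)
  (hP : P^T = P) (y : 'cV[R]_m) :
  gradient (fun w => Jcost P Q r S pi i w xs) y =
  P *m y + (Q *m sigma_others xs i + r i + S i *m pi).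
Proof.
apply/matrixP => c k; rewrite (ord1 k) [LHS]mxE.
under eq_fun do rewrite Jexp //.
by rewrite d1q trmx_delta -rowE mxE.
Qed.

Lemma jac_gJ (R : realType) N m (P Q : 'M[R]_m) (r : 'I_N -> 'cV[R]_m)
  (S : 'I_N -> 'M[R]_m) (pi : 'cV[R]_m) (i : 'I_N) (xs : 'I_N -> 'cV[R]_m)
  (hP : P^T = P) (y : 'cV[R]_m) :
  jac (fun y => gradient (fun w => Jcost P Q r S pi i w xs) y) y = P.
Proof.
apply: jac_affine => c t.
rewrite !grad_J // mulmxDr -scalemxAr.
by rewrite addrAC.
Qed.

Lemma mxBE (R : realType) k (A B : 'cV[R]_k) j : (A - B) j 0 = A j 0 - B j 0.
Proof. by rewrite !mxE. Qed.

Lemma delta_split (R : realType) a b d (c : 'I_(a + b + d)) (i : 'I_a) (j : 'I_b) :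
  (usubmx (usubmx (delta_mx c 0 : 'cV[R]_(a+b+d)))) i 0 *
  (dsubmx (usubmx (delta_mx c 0 : 'cV[R]_(a+b+d)))) j 0 = 0.
Proof.
rewrite !mxE.
case: eqP => [E1|]; last by rewrite mul0r.
case: (lshift d (rshift a j) =P c) => [E2|]; last by rewrite andFb mulr0.
exfalso; move: E2; rewrite -E1 => /(congr1 (@nat_of_ord _)) /= E.
 have := ltn_ord i; rewrite -E; lia.
Qed.

Lemma kkt_unit (R : realType) m k n (H : 'M[R]_m) (Gu : 'M[R]_(k,m))
  (s : 'cV[R]_k) (Ab : 'M[R]_(n,m)) :
  posdef H -> (forall j, s j 0 < 0) -> row_free Ab ->
  block_mx (block_mx H Gu^T 0 (Dg s)) (col_mx Ab^T 0) (row_mx Ab 0) 0 \in unitmx.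
Proof.
move=> hH hs hA.
set M := block_mx _ _ _ _.
rewrite -unitmx_tr -row_free_unit -kermx_eq0.
suff Hk : forall v : 'cV_(m + k + n), M *m v = 0 -> v = 0.
  apply/eqP/row_matrixP => l; rewrite row0.
  have /sub_kermxP h : (row l (kermx M^T) <= kermx M^T)%MS by exact: row_sub.
  apply: trmx_inj; rewrite trmx0; apply: Hk.
  by have := congr1 trmx h; rewrite trmx_mul trmxK trmx0.
move=> v; rewrite -[v]vsubmxK -[usubmx v]vsubmxK.
move: (usubmx (usubmx v)) (dsubmx (usubmx v)) (dsubmx v) => x l nu.
rewrite /M !mul_block_col mul_col_mx mul_row_col !mul0mx !add0r !addr0 add_col_mx addr0.
move=> /eqP; rewrite !col_mx_eq0 => /andP[/andP[/eqP E1 /eqP E2] /eqP E3].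
have l0 : l = 0.
  apply/matrixP => j c; have := congr1 (fun A : 'cV[R]_k => A j c) E2.
  rewrite /Dg mul_diag_mx !mxE => /eqP; rewrite mulf_eq0 => /orP[|/eqP //].
  by move: (hs j) => /[swap] /eqP -> ; rewrite ltxx.
rewrite l0 mulmx0 addr0 in E1.
have x0 : x = 0.
  apply/eqP; apply/negPn/negP => /hH.
  have -> : x^T *m H *m x = - ((Ab *m x)^T *m nu).
    rewrite -mulmxA (_ : H *m x = - (Ab^T *m nu)); last first.
      by apply/eqP; rewrite -addr_eq0 E1.
    by rewrite mulmxN trmx_mul mulmxA.
  by rewrite E3 trmx0 mul0mx oppr0 mxE ltxx.
rewrite x0 mulmx0 add0r in E1.
have nu0 : nu = 0.
  apply: trmx_inj; rewrite trmx0; apply/eqP.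
  by rewrite -(mulmx_free_eq0 _ hA) -[Ab]trmxK -trmx_mul E1 trmx0.
by rewrite x0 l0 nu0 !col_mx0.
Qed.

Theorem theorem2 (R : realType) (N m : nat) (p q : 'I_N -> nat)
  (A : forall j, 'M[R]_(p j, m)) (b : forall j, 'cV[R]_(p j))
  (G : forall j, 'M[R]_(q j, m)) (h : forall j, 'cV[R]_(q j))
  (P Q : 'M[R]_m) (r : 'I_N -> 'cV[R]_m) (S : 'I_N -> 'M[R]_m)
  (pi : 'cV[R]_m) (xs : 'I_N -> 'cV[R]_m) (i : 'I_N)
  (lamh : 'cV[R]_(#|~: active_set (G i) (h i) (xs i)|))
  (nuh : 'cV[R]_(p i + #|active_set (G i) (h i) (xs i)|)) :
  (forall j, polyset (A j) (b j) (G j) (h j) !=set0) ->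
  (forall j, compact (polyset (A j) (b j) (G j) (h j))) ->
  (forall j, slater (A j) (b j) (G j) (h j)) ->
  P^T = P -> posdef P ->
  Q^T = Q -> psd Q ->
  posdef (P - Q) ->
  (forall j, is_diag_mx (S j) /\ psd (S j)) ->
  is_NE (fun j => polyset (A j) (b j) (G j) (h j)) (Jcost P Q r S pi) xs ->
  (forall ys, is_NE (fun j => polyset (A j) (b j) (G j) (h j))
                    (Jcost P Q r S pi) ys -> ys = xs) ->
  (forall k, 0 <= lamh k 0) ->
  kkt_map (A i) (b i) (G i) (h i) (xs i)
    (fun y => gradient (fun w => Jcost P Q r S pi i w xs) y)
    (col_mx (col_mx (xs i) lamh) nuh) = 0 ->
  row_free (Abar (A i) (G i) (h i) (xs i)) ->
  Gamma_bar (G i) (h i) (xs i) lamh = finset.set0 /\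
  let Jac := jac (kkt_map (A i) (b i) (G i) (h i) (xs i)
               (fun y => gradient (fun w => Jcost P Q r S pi i w xs) y))
               (col_mx (col_mx (xs i) lamh) nuh) in
  Jac \in unitmx /\
  Jac = block_mx
     (block_mx (jac (fun y => gradient (fun w => Jcost P Q r S pi i w xs) y) (xs i))
               (Gunder (G i) (h i) (xs i))^T
               0
               (Dg (Gunder (G i) (h i) (xs i) *m xs i - hunder (G i) (h i) (xs i))))
     (col_mx (Abar (A i) (G i) (h i) (xs i))^T 0)
     (row_mx (Abar (A i) (G i) (h i) (xs i)) 0)
     0.
Proof.
move=> _ _ _ hPs hPd _ _ _ _ hNE _ _ hKKT hrf.
have [[hAx hGx] _] := hNE i.
set f := fun k => @enum_val _ (mem (~: active_set (G i) (h i) (xs i))) k.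
have slack : forall j, (Gunder (G i) (h i) (xs i) *m xs i - hunder (G i) (h i) (xs i)) j 0 < 0.
  move=> j.
  have e1 : (Gunder (G i) (h i) (xs i) *m xs i) j 0 = (G i *m xs i) (f j) 0.
    by rewrite !mxE; apply: eq_bigr => k _; rewrite mxE.
  rewrite mxBE e1 [hunder _ _ _ _ _]mxE subr_lt0 lt_neqAle hGx andbT.
  have := enum_valP j; rewrite -/(f j) finset.in_setC inE.
  by [].
move/eqP: (hKKT) => hK.
rewrite /kkt_map !col_mxKu !col_mxKd !col_mx_eq0 in hK.
case/andP: hK => /andP[_ /eqP E2] _.
have lam0 : lamh = 0.
  apply/matrixP => j c; rewrite (ord1 c).
  have := congr1 (fun B : 'cV[R]_(_) => B j 0) E2.
  rewrite /Dg mul_diag_mx mxE [_^T 0 j]mxE [RHS]mxE => /eqP.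
  by rewrite mulf_eq0 (lt_eqF (slack j)) orbF => /eqP ->; rewrite mxE.
split.
  by apply/setP => j; rewrite !inE (lt_eqF (slack j)) andbF.
intros Jac.
set gJ := (fun y => _) in Jac *.
set Gu := Gunder (G i) (h i) (xs i) in Jac slack *.
set hu := hunder (G i) (h i) (xs i) in Jac slack *.
set Ab := Abar (A i) (G i) (h i) (xs i) in Jac hrf *.
have EJ : Jac = block_mx (block_mx (jac gJ (xs i)) Gu^T 0 (Dg (Gu *m xs i - hu)))
     (col_mx Ab^T 0) (row_mx Ab 0) 0.
  rewrite /Jac; apply: jac_affine => c t.
  have hb := delta_split R _ _ _ c.
  move: (delta_mx c 0) hb => e hb.
  rewrite -[e]vsubmxK -[usubmx e]vsubmxK.
  move: (usubmx (usubmx e)) (dsubmx (usubmx e)) (dsubmx e) hb => ex el en hb.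
  rewrite lam0 scale_col_mx scale_col_mx !add_col_mx.
  rewrite !mul_block_col mul_col_mx mul_row_col !mul0mx !add0r !addr0 add_col_mx addr0.
  rewrite /kkt_map !col_mxKu !col_mxKd scale_col_mx scale_col_mx !add_col_mx.
  rewrite -/Gu -/hu -/Ab.
  congr (col_mx (col_mx _ _) _).
  - rewrite /gJ jac_gJ // !grad_J // mulmx0 addr0 !mulmxDr -!scalemxAr !scalerDr.
    move: (P *m xs i) (t *: (P *m ex)) (Q *m _ + _ + _) (t *: (Gu^T *m el))
      (Ab^T *m nuh) (t *: (Ab^T *m en)) => a1 a2 a3 a4 a5 a6.
    by apply/matrixP => u v; rewrite !mxE; ring.
  - have hu0 : forall j, el j 0 * (Gu *m ex) j 0 = 0.
      move=> j; rewrite mxE mulr_sumr big1 // => k _.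
      by rewrite mulrCA (mulrC (el j 0)) hb mulr0.
    rewrite [Gu *m (_ + _)]mulmxDr -scalemxAr.
    apply/matrixP => j k; rewrite (ord1 k) /Dg !mul_diag_mx.
    have h0 := hu0 j; clear slack hu0 E2 lam0 Jac.
    move: (Gu *m xs i) (Gu *m ex) hu h0 => w u hv h0.
    rewrite !mxE.
    have -> : t * el j 0 * (w j 0 + t * u j 0 - hv j 0) =
      t * ((w j 0 - hv j 0) * el j 0) + t * t * (el j 0 * u j 0) by ring.
    by rewrite h0; ring.
  - by rewrite mulmxDr -scalemxAr addrAC.
split; last exact EJ.
rewrite EJ; apply: kkt_unit => //.
by rewrite /gJ jac_gJ.
Qed.
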